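(* Let $x,y\in(0,1)$ and $n\in\mathbb{N}$. Let $X,X_1,X_2,Y,Y_1,Y_2$ be random variables with $X,X_1,X_2\sim B(n,x)$ and $Y,Y_1,Y_2\sim B(n,y)$, such that $X,Y$ are independent, $X_1,X_2$ are independent, and $Y_1,Y_2$ are independent. Then \[ F_{X+Y}\leqslant_{\mathrm{cx}}\tfrac12\bigl(F_{X_1+X_2}+F_{Y_1+Y_2}\bigr), \] i.e. $\mathbb{E}\,f(X+Y)\le \tfrac12\bigl(\mathbb{E}\,f(X_1+X_2)+\mathbb{E}\,f(Y_1+Y_2)\bigr)$ for every convex $f:\mathbb{R}\to\mathbb{R}$.
   Context: $B(n,p)$ denotes the binomial distribution with parameters $n\in\mathbb{N}$, $p\in(0,1)$: $P(X=k)=\binom nk p^k(1-p)^{n-k}$, $k=0,\dots,n$. $F_X(t)=P(X<t)$ is the distribution function of $X$. For distribution functions $G,H$ (of probability measures on $\mathbb{R}$ with finite first moment) one writes $G\leqslant_{\mathrm{cx}}H$ if $\int f\,dG\le\int f\,dH$ for all convex $f:\mathbb{R}\to\mathbb{R}$ for which the integrals exist; for random variables, $X\leqslant_{\mathrm{cx}}Y$ means $F_X\leqslant_{\mathrm{cx}}F_Y$, i.e. $\mathbb{E} f(X)\le\mathbb{E} f(Y)$ for all such convex $f$. A convex combination of distribution functions such as $\tfrac12(F_{X_1+X_2}+F_{Y_1+Y_2})$ is the distribution function of the corresponding mixture. *)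

(* Defs.v *)
From Stdlib Require Import Reals Lra.
Open Scope R_scope.

Definition convex (f : R -> R) : Prop :=
  forall a b t : R, 0 <= t <= 1 ->
    f (t * a + (1 - t) * b) <= t * f a + (1 - t) * f b.

Definition binom_pmf (n : nat) (p : R) (k : nat) : R :=
  C n k * p ^ k * (1 - p) ^ (n - k).

Definition E_sum_indep (n : nat) (p q : R) (f : R -> R) : R :=
  sum_f_R0 (fun k =>
    sum_f_R0 (fun l => binom_pmf n p k * binom_pmf n q l * f (INR k + INR l)) n) n.

(* Main.v *)
Require Import Defs.
From Stdlib Require Import Reals.
From Stdlib Require Import Lra List FunctionalExtensionality Arith Lia.
Open Scope R_scope.

Fixpoint Ef (ps : list R) (h : R -> R) : R :=
  match ps with
  | nil => h 0
  | p :: ps' => p * Ef ps' (fun s => h (s + 1)) + (1 - p) * Ef ps' h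
  end.

Lemma Ef_lin ps : forall g k a b,
  Ef ps (fun s => a * g s + b * k s) = a * Ef ps g + b * Ef ps k.
Proof.
  induction ps as [|p ps IH]; intros g k a b; simpl; [reflexivity|].
  rewrite (IH (fun s => g (s+1)) (fun s => k (s+1))), IH. ring.
Qed.

Lemma Ef_pos ps : Forall (fun p => 0 <= p <= 1) ps ->
  forall h, (forall s, 0 <= h s) -> 0 <= Ef ps h.
Proof.
  induction ps as [|p ps IH]; intros Hps h Hh; simpl; [apply Hh|].
  inversion Hps; subst.
  assert (0 <= Ef ps (fun s => h (s + 1))) by (apply IH; auto).
  assert (0 <= Ef ps h) by (apply IH; auto).
  apply Rplus_le_le_0_compat; apply Rmult_le_pos; lra.
Qed.

Lemma Ef_comm a : forall b g,
  Ef a (fun s => Ef b (fun t => g s t)) = Ef b (fun t => Ef a (fun s => g s t)).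
Proof.
  induction a as [|p a IH]; intros b g; simpl; [reflexivity|].
  rewrite (IH b (fun s t => g (s+1) t)), (IH b g).
  rewrite <- Ef_lin. reflexivity.
Qed.

Definition PL (M : (R -> R) -> R) :=
  (forall g k a b, M (fun s => a * g s + b * k s) = a * M g + b * M k) /\
  (forall g, (forall s, 0 <= g s) -> 0 <= M g).

Lemma Forall_repeat (P : R -> Prop) p n : P p -> Forall P (repeat p n).
Proof. intro H; induction n; simpl; constructor; auto. Qed.

Lemma one_dim x y (hx : 0 <= x <= 1) (hy : 0 <= y <= 1) n :
  exists M, PL M /\ forall h,
    Ef (repeat x n) h - Ef (repeat y n) h = (x - y) * M (fun s => h (s + 1) - h s).
Proof.
  induction n as [|n [M [[Ml Mp] HM]]].
  - exists (fun _ => 0). split; [split; intros; simpl; lra|].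
    intros h; simpl; ring.
  - exists (fun k => Ef (repeat x n) k + y * M (fun s => k (s+1)) + (1-y) * M k).
    split; [split|].
    + intros g k a b. rewrite Ef_lin.
      rewrite (Ml (fun s => g (s+1)) (fun s => k (s+1))), Ml. ring.
    + intros g Hg.
      assert (0 <= Ef (repeat x n) g) by (apply Ef_pos; auto; apply Forall_repeat; lra).
      assert (0 <= M (fun s => g (s+1))) by (apply Mp; auto).
      assert (0 <= M g) by (apply Mp; auto).
      assert (0 <= y * M (fun s => g (s+1))) by (apply Rmult_le_pos; lra).
      assert (0 <= (1-y) * M g) by (apply Rmult_le_pos; lra).
      lra.
    + intros h. simpl.
      pose proof (HM (fun s => h (s+1))) as H1.
      pose proof (HM h) as H0.
      replace (Ef (repeat x n) (fun s => h (s + 1) - h s)) with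
        (Ef (repeat x n) (fun s => 1 * h (s + 1) + (-1) * h s)).
      2: { f_equal; apply functional_extensionality; intro; ring. }
      rewrite Ef_lin. simpl in H1. 
      assert (E1 : Ef (repeat y n) (fun s => h (s + 1)) = Ef (repeat x n) (fun s => h (s + 1))
         - (x - y) * M (fun s => h (s + 1 + 1) - h (s + 1))) by lra.
      assert (E0 : Ef (repeat y n) h = Ef (repeat x n) h - (x - y) * M (fun s => h (s + 1) - h s)) by lra.
      rewrite E1, E0; ring.
Qed.

Definition Phi (a b : list R) (f : R -> R) := Ef a (fun s => Ef b (fun t => f (s + t))).

Lemma Phi_sym a b f : Phi a b f = Phi b a f.
Proof.
  unfold Phi. rewrite (Ef_comm a b (fun s t => f (s + t))).
  f_equal; apply functional_extensionality; intro t.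
  f_equal; apply functional_extensionality; intro s. f_equal; ring.
Qed.

Lemma convex_d2 f (hf : convex f) a : 0 <= f (a + 2) - 2 * f (a + 1) + f a.
Proof.
  pose proof (hf a (a + 2) (/2)) as H.
  replace (/2 * a + (1 - /2) * (a + 2)) with (a + 1) in H by field.
  lra.
Qed.

Lemma main_Ef x y (hx : 0 <= x <= 1) (hy : 0 <= y <= 1) n f (hf : convex f) :
  Phi (repeat x n) (repeat y n) f <=
  / 2 * (Phi (repeat x n) (repeat x n) f + Phi (repeat y n) (repeat y n) f).
Proof.
  destruct (one_dim x y hx hy n) as [M [[Ml Mp] HM]].
  set (u := repeat x n). set (v := repeat y n). fold u v in HM.
  set (K := fun s => Ef u (fun t => f (s + t)) - Ef v (fun t => f (s + t))).
  assert (HD : Phi u u f - Phi u v f - (Phi v u f - Phi v v f) = Ef u K - Ef v K).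
  { unfold Phi, K.
    replace (fun s => Ef u (fun t => f (s + t)) - Ef v (fun t => f (s + t))) with
      (fun s => 1 * Ef u (fun t => f (s + t)) + (-1) * Ef v (fun t => f (s + t)))
      by (apply functional_extensionality; intro; ring).
    rewrite !Ef_lin. ring. }
  set (P := fun s => M (fun t => 1 * (f (s + 1 + (t + 1)) - f (s + 1 + t))
                                 + (-1) * (f (s + (t + 1)) - f (s + t)))).
  assert (HP : forall s, 0 <= P s).
  { intro s. unfold P. apply Mp. intro t.
    pose proof (convex_d2 f hf (s + t)) as C.
    replace (s + 1 + (t + 1)) with (s + t + 2) by ring.
    replace (s + 1 + t) with (s + t + 1) by ring.
    replace (s + (t + 1)) with (s + t + 1) by ring. lra. }
  assert (HK : (fun s => K (s + 1) - K s) = (fun s => (x - y) * P s + 0 * P s)).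
  { apply functional_extensionality; intro s. unfold K, P.
    rewrite (HM (fun t => f (s + 1 + t))), (HM (fun t => f (s + t))).
    rewrite Ml. ring. }
  assert (HD2 : Ef u K - Ef v K = (x - y) * ((x - y) * M P)).
  { rewrite HM, HK, Ml. ring. }
  assert (0 <= M P) by (apply Mp; exact HP).
  assert (0 <= (x - y) * ((x - y) * M P)).
  { rewrite <- Rmult_assoc. apply Rmult_le_pos; [apply Rle_0_sqr|lra]. }
  rewrite (Phi_sym v u) in HD. lra.
Qed.

Lemma C_n_0' n : C n 0 = 1.
Proof. unfold C. rewrite Nat.sub_0_r. simpl. field. apply INR_fact_neq_0. Qed.

Lemma C_n_n' n : C n n = 1.
Proof. unfold C. rewrite Nat.sub_diag. simpl. field. apply INR_fact_neq_0. Qed.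

Lemma sum_scal_l (A : nat -> R) c N : sum_f_R0 (fun i => c * A i) N = c * sum_f_R0 A N.
Proof. rewrite scal_sum. apply sum_eq. intros; ring. Qed.

Definition B n p k := if (k <=? n)%nat then binom_pmf n p k else 0.

Lemma B_S0 n p : B (S n) p 0 = (1 - p) * B n p 0.
Proof. unfold B, binom_pmf. simpl. rewrite !C_n_0'. rewrite Nat.sub_0_r. ring. Qed.

Lemma B_SS n p k : B (S n) p (S k) = p * B n p k + (1 - p) * B n p (S k).
Proof.
  unfold B, binom_pmf.
  destruct (lt_eq_lt_dec k n) as [[Hlt|Heq]|Hgt].
  - replace (S k <=? S n)%nat with true by (symmetry; apply Nat.leb_le; lia).
    replace (k <=? n)%nat with true by (symmetry; apply Nat.leb_le; lia).
    replace (S k <=? n)%nat with true by (symmetry; apply Nat.leb_le; lia).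
    rewrite <- (pascal n k Hlt).
    replace (S n - S k)%nat with (S (n - S k)) by lia.
    replace (n - k)%nat with (S (n - S k)) by lia.
    simpl. ring.
  - subst k.
    replace (S n <=? S n)%nat with true by (symmetry; apply Nat.leb_le; lia).
    replace (n <=? n)%nat with true by (symmetry; apply Nat.leb_le; lia).
    replace (S n <=? n)%nat with false by (symmetry; apply Nat.leb_gt; lia).
    rewrite !C_n_n', !Nat.sub_diag. simpl. ring.
  - replace (S k <=? S n)%nat with false by (symmetry; apply Nat.leb_gt; lia).
    replace (k <=? n)%nat with false by (symmetry; apply Nat.leb_gt; lia).
    replace (S k <=? n)%nat with false by (symmetry; apply Nat.leb_gt; lia).
    ring.
Qed.

Lemma Ef_B n p : forall h,
  Ef (repeat p n) h = sum_f_R0 (fun k => B n p k * h (INR k)) (S n).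
Proof.
  induction n as [|n IH]; intro h.
  - simpl. unfold B, binom_pmf. simpl. rewrite C_n_0'. ring.
  - change (Ef (repeat p (S n)) h) with
      (p * Ef (repeat p n) (fun s => h (s + 1)) + (1 - p) * Ef (repeat p n) h).
    rewrite !IH.
    rewrite (decomp_sum _ (S (S n))) by lia.
    rewrite (decomp_sum (fun k => B n p k * h (INR k)) (S n)) by lia.
    simpl pred.
    rewrite B_S0.
    rewrite (sum_eq (fun i => B (S n) p (S i) * h (INR (S i)))
       (fun i => p * (B n p i * h (INR i + 1)) + (1 - p) * (B n p (S i) * h (INR (S i))))).
    2: { intros i _. rewrite B_SS, S_INR. ring. }
    rewrite sum_plus, !sum_scal_l.
    replace (sum_f_R0 (fun i => B n p (S i) * h (INR (S i))) (S n)) with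
      (sum_f_R0 (fun i => B n p (S i) * h (INR (S i))) n + B n p (S (S n)) * h (INR (S (S n))))
      by reflexivity.
    assert (Z1 : B n p (S n) = 0) by (unfold B; replace (S n <=? n)%nat with false by (symmetry; apply Nat.leb_gt; lia); reflexivity).
    assert (Z2 : B n p (S (S n)) = 0) by (unfold B; replace (S (S n) <=? n)%nat with false by (symmetry; apply Nat.leb_gt; lia); reflexivity).
    rewrite Z2. ring.
Qed.

Lemma Ef_binom n p h :
  Ef (repeat p n) h = sum_f_R0 (fun k => binom_pmf n p k * h (INR k)) n.
Proof.
  rewrite Ef_B. simpl sum_f_R0 at 1.
  assert (Z1 : B n p (S n) = 0) by (unfold B; replace (S n <=? n)%nat with false by (symmetry; apply Nat.leb_gt; lia); reflexivity).
  rewrite Z1, Rmult_0_l, Rplus_0_r. apply sum_eq. intros i Hi.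
  unfold B. replace (i <=? n)%nat with true by (symmetry; apply Nat.leb_le; lia). reflexivity.
Qed.

Lemma E_Phi n p q f : E_sum_indep n p q f = Phi (repeat p n) (repeat q n) f.
Proof.
  unfold Phi, E_sum_indep. rewrite Ef_binom. apply sum_eq. intros k _.
  rewrite Ef_binom, <- sum_scal_l. apply sum_eq. intros l _. ring.
Qed.

Theorem theorem2 (x y : R) (n : nat) (hx : 0 < x < 1) (hy : 0 < y < 1)
  (f : R -> R) (hf : convex f) :
  E_sum_indep n x y f <= / 2 * (E_sum_indep n x x f + E_sum_indep n y y f).
Proof.
  rewrite !E_Phi. apply main_Ef; auto; lra.
Qed.
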